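(* Let $n,T,K$ be positive integers. Let $P_1,\ldots,P_T$ be $n\times n$ matrices and let $\hat P_1,\ldots,\hat P_T$ be arbitrary $n\times n$ matrices (estimates of the $P_i$). Define the $T\times T$ matrices $D$ and $\hat D$ by $D_{ij}=\|P_i-P_j\|_F$ and $\hat D_{ij}=\|\hat P_i-\hat P_j\|_F$. Suppose $D$ has rank $K$. Let $V$ (resp. $\hat V$) be a $T\times K$ matrix whose columns are orthonormal eigenvectors of $D$ (resp. $\hat D$) corresponding to its $K$ eigenvalues of largest absolute value. Let $\gamma$ be the smallest absolute value among the $K$ nonzero eigenvalues of $D$ (equivalently, the $K$-th largest eigenvalue of $D$ in absolute value). Then there exists a $K\times K$ orthogonal matrix $\hat O$ such that \[ \|\hat V\hat O-V\|_F^2\le \frac{64T}{\gamma^2}\sum_{i=1}^T\|\hat P_i-P_i\|_F^2 . \]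
   Context: $\|\cdot\|_F$ denotes the Frobenius norm. In the intended application, $P_i$ is the link probability matrix of the $i$-th observed network on a common set of $n$ nodes (node correspondence present) and $\hat P_i$ is an estimate of it obtained from the observed adjacency matrix. *)

(* Defs.v *)
From mathcomp Require Import all_boot all_order all_algebra.
Set Implicit Arguments. Unset Strict Implicit. Unset Printing Implicit Defensive.
Import Order.TTheory GRing.Theory Num.Theory.
Local Open Scope ring_scope.

Definition frob (R : rcfType) (m n : nat) (A : 'M[R]_(m, n)) : R :=
  Num.sqrt (\sum_(i < m) \sum_(j < n) A i j ^+ 2).

Definition distmat (R : rcfType) (n T : nat) (P : 'I_T -> 'M[R]_n) : 'M[R]_T :=
  \matrix_(i, j) frob (P i - P j).

(* V has orthonormal columns which are eigenvectors of A with eigenvalues lam,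
   and these are K eigenvalues of largest absolute value: every eigenvalue of an
   eigenvector orthogonal to the columns of V has absolute value at most each |lam k|. *)
Definition top_abs_eigvecs (R : rcfType) (T K : nat) (A : 'M[R]_T)
    (V : 'M[R]_(T, K)) (lam : 'rV[R]_K) : Prop :=
  [/\ V^T *m V = 1%:M,
      A *m V = V *m diag_mx lam &
      forall (x : 'cV[R]_T) (mu : R),
        V^T *m x = 0 -> x != 0 -> A *m x = mu *: x ->
        forall k : 'I_K, `|mu| <= `|lam 0 k| ].

(* Main.v *)
Require Import Defs.
From mathcomp Require Import all_boot all_order all_algebra.
From mathcomp Require Import complex closed_field.
From mathcomp Require Import ring lra.
Import Order.TTheory GRing.Theory Num.Theory.
Local Open Scope ring_scope.
Set Implicit Arguments. Unset Strict Implicit. Unset Printing Implicit Defensive.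

Definition sq {R : rcfType} m n (A : 'M[R]_(m, n)) : R :=
  \sum_(i < m) \sum_(j < n) A i j ^+ 2.

Lemma sq_ge0 {R : rcfType} m n (A : 'M[R]_(m, n)) : 0 <= sq A.
Proof. by apply: sumr_ge0 => i _; apply: sumr_ge0 => j _; apply: sqr_ge0. Qed.

Lemma frob_sq {R : rcfType} m n (A : 'M[R]_(m, n)) : frob A ^+ 2 = sq A.
Proof. by rewrite /frob sqr_sqrtr // sq_ge0. Qed.

Lemma sqE {R : rcfType} m n (A : 'M[R]_(m, n)) : sq A = \tr (A *m A^T).
Proof.
rewrite /sq /mxtrace; apply: eq_bigr => i _; rewrite mxE.
by apply: eq_bigr => j _; rewrite mxE expr2.
Qed.

Lemma sq_tr {R : rcfType} m n (A : 'M[R]_(m, n)) : sq A^T = sq A.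
Proof. by rewrite /sq exchange_big; apply: eq_bigr => i _; apply: eq_bigr => j _; rewrite mxE. Qed.

Lemma sqE' {R : rcfType} m n (A : 'M[R]_(m, n)) : sq A = \tr (A^T *m A).
Proof. by rewrite -sq_tr sqE trmxK. Qed.

Lemma sq_eq0 {R : rcfType} m n (A : 'M[R]_(m, n)) : sq A = 0 -> A = 0.
Proof.
move=> /eqP; rewrite psumr_eq0; last by move=> i _; apply: sumr_ge0 => j _; apply: sqr_ge0.
move=> /allP H; apply/matrixP => i j; rewrite mxE.
have := H i (mem_index_enum _); rewrite psumr_eq0; last by move=> k _; apply: sqr_ge0.
by move=> /allP /(_ j (mem_index_enum _)) /=; rewrite sqrf_eq0 => /eqP.
Qed.

Lemma sqN {R : rcfType} m n (A : 'M[R]_(m, n)) : sq (- A) = sq A.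
Proof. by rewrite /sq; apply: eq_bigr => i _; apply: eq_bigr => j _; rewrite mxE sqrrN. Qed.

Lemma sq_mul_proj {R : rcfType} m n (A : 'M[R]_(m, n)) (P : 'M[R]_n) :
  P^T = P -> P *m P = P -> sq (A *m P) <= sq A.
Proof.
move=> PT PP.
have QT : (1%:M - P)^T = 1%:M - P by rewrite linearB /= trmx1 PT.
have QQ : (1%:M - P) *m (1%:M - P) = 1%:M - P.
  by rewrite mulmxBl mul1mx mulmxBr mulmx1 PP subrr subr0.
have h X : X^T = X -> X *m X = X -> sq (A *m X) = \tr (A *m X *m A^T).
  by move=> XT XX; rewrite sqE trmx_mul XT !mulmxA -(mulmxA A X X) XX.
have -> : sq A = sq (A *m P) + sq (A *m (1%:M - P)).
  rewrite (h _ PT PP) (h _ QT QQ) -mxtraceD -mulmxDl -mulmxDr addrC subrK mulmx1.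
  by rewrite sqE.
by rewrite lerDl sq_ge0.
Qed.

Lemma sq_mul_orth {R : rcfType} m n p (A : 'M[R]_(m, n)) (B : 'M[R]_(n, p)) :
  B^T *m B = 1%:M -> sq (A *m B) <= sq A.
Proof.
move=> BB.
have -> : sq (A *m B) = sq (A *m (B *m B^T)).
  by rewrite !sqE !trmx_mul trmxK !mulmxA -(mulmxA _ B^T B) BB mulmx1.
apply: sq_mul_proj; first by rewrite trmx_mul trmxK.
by rewrite mulmxA -(mulmxA B) BB mulmx1.
Qed.

Lemma sq_proj_mul {R : rcfType} m n (A : 'M[R]_(m, n)) (P : 'M[R]_m) :
  P^T = P -> P *m P = P -> sq (P *m A) <= sq A.
Proof. by move=> PT PP; rewrite -sq_tr trmx_mul PT -(sq_tr A) sq_mul_proj. Qed.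

Lemma sq_orth_mul {R : rcfType} m n p (A : 'M[R]_(m, n)) (B : 'M[R]_(m, p)) :
  B^T *m B = 1%:M -> sq (B^T *m A) <= sq A.
Proof. by move=> BB; rewrite -sq_tr trmx_mul trmxK -(sq_tr A) sq_mul_orth. Qed.

Lemma sq_orthsq_mul {R : rcfType} m n (A : 'M[R]_(m, n)) (B : 'M[R]_m) :
  B *m B^T = 1%:M -> sq (B^T *m A) = sq A.
Proof. by move=> BB; rewrite !sqE' trmx_mul trmxK mulmxA -(mulmxA _ B) BB mulmx1. Qed.

Lemma sq_proj_tr {R : rcfType} m n (A : 'M[R]_(m, n)) (P : 'M[R]_m) :
  P^T = P -> P *m P = P -> sq (P *m A) = \tr (A^T *m P *m A).
Proof. by move=> PT PP; rewrite sqE' trmx_mul PT !mulmxA -(mulmxA _ P P) PP. Qed.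

Definition dotm {R : rcfType} m n (A B : 'M[R]_(m, n)) : R :=
  \sum_(i < m) \sum_(j < n) A i j * B i j.

Lemma sqD {R : rcfType} m n (A B : 'M[R]_(m, n)) : sq (A + B) = sq A + sq B + 2 * dotm A B.
Proof.
rewrite /sq /dotm mulr_sumr -!big_split /=; apply: eq_bigr => i _.
rewrite mulr_sumr -!big_split /=; apply: eq_bigr => j _; rewrite mxE; ring.
Qed.

Lemma sq_scale {R : rcfType} m n (t : R) (A : 'M[R]_(m, n)) : sq (t *: A) = t ^+ 2 * sq A.
Proof.
rewrite /sq mulr_sumr; apply: eq_bigr => i _; rewrite mulr_sumr; apply: eq_bigr => j _.
by rewrite mxE exprMn.
Qed.

Lemma dotmZ {R : rcfType} m n (t : R) (A B : 'M[R]_(m, n)) : dotm A (t *: B) = t * dotm A B.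
Proof.
rewrite /dotm mulr_sumr; apply: eq_bigr => i _; rewrite mulr_sumr; apply: eq_bigr => j _.
rewrite mxE; ring.
Qed.

Lemma dotmC {R : rcfType} m n (A B : 'M[R]_(m, n)) : dotm A B = dotm B A.
Proof. by apply: eq_bigr => i _; apply: eq_bigr => j _; rewrite mulrC. Qed.

Lemma cauchy_schwarz {R : rcfType} m n (A B : 'M[R]_(m, n)) :
  dotm A B ^+ 2 <= sq A * sq B.
Proof.
have [B0|Bn0] := eqVneq (sq B) 0.
  have -> : B = 0 by apply: sq_eq0.
  rewrite /dotm big1 ?expr0n /=; first by rewrite mulr_ge0 ?sq_ge0.
  by move=> i _; rewrite big1 // => j _; rewrite mxE mulr0.
have Bp : 0 < sq B by rewrite lt_def Bn0 sq_ge0.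
set t := dotm A B / sq B.
have := sq_ge0 (A + (- t) *: B); rewrite sqD sq_scale dotmZ.
rewrite /t => H.
have : 0 <= sq A * sq B - dotm A B ^+ 2.
  have e : sq A * sq B - dotm A B ^+ 2 =
    sq B * (sq A + (- (dotm A B / sq B)) ^+ 2 * sq B + 2 * (- (dotm A B / sq B) * dotm A B)).
    by field; rewrite Bn0.
  by rewrite e mulr_ge0 // ltW.
by rewrite subr_ge0.
Qed.

Lemma frob_ge0 {R : rcfType} m n (A : 'M[R]_(m, n)) : 0 <= frob A.
Proof. exact: sqrtr_ge0. Qed.

Lemma frob_triangle {R : rcfType} m n (A B : 'M[R]_(m, n)) : frob (A + B) <= frob A + frob B.
Proof.
have h1 : dotm A B <= frob A * frob B.
  have := cauchy_schwarz A B; rewrite -(frob_sq A) -(frob_sq B) -exprMn => H.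
  apply: le_trans (ler_norm (dotm A B)) _.
  rewrite -(ler_pXn2r (_ : (0 < 2)%N)) ?nnegrE ?mulr_ge0 ?frob_ge0 //.
  by rewrite real_normK ?num_real.
rewrite -(ler_pXn2r (_ : (0 < 2)%N)) ?nnegrE ?addr_ge0 ?frob_ge0 //.
rewrite frob_sq sqD -(frob_sq A) -(frob_sq B); nra.
Qed.

Lemma frob_rev {R : rcfType} m n (A B : 'M[R]_(m, n)) : `|frob A - frob B| <= frob (A - B).
Proof.
have h1 := frob_triangle (A - B) B; rewrite subrK in h1.
have h2 := frob_triangle (B - A) A; rewrite subrK in h2.
have e : frob (B - A) = frob (A - B) by rewrite -opprB; exact: (congr1 Num.sqrt (sqN (A - B))).
rewrite ler_norml; apply/andP; split; lra.
Qed.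

Definition dotc {R : rcfType} n (u v : 'cV[R]_n) : R := (u^T *m v) 0 0.

Lemma dotcE {R : rcfType} n (u v : 'cV[R]_n) : dotc u v = \sum_r u r 0 * v r 0.
Proof. by rewrite /dotc mxE; apply: eq_bigr => r _; rewrite mxE. Qed.

Lemma dotcC {R : rcfType} n (u v : 'cV[R]_n) : dotc u v = dotc v u.
Proof. by rewrite !dotcE; apply: eq_bigr => r _; rewrite mulrC. Qed.

Lemma trmul_dotc {R : rcfType} m n p (A : 'M[R]_(m, n)) (B : 'M[R]_(m, p)) i k :
  (A^T *m B) i k = dotc (col i A) (col k B).
Proof. by rewrite dotcE mxE; apply: eq_bigr => r _; rewrite !mxE. Qed.

Definition setc {R : rcfType} n (X : 'M[R]_n) (j : 'I_n) (x : 'cV[R]_n) : 'M[R]_n :=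
  \matrix_(r, k) if k == j then x r 0 else X r k.

Lemma col_setc {R : rcfType} n (X : 'M[R]_n) j x k :
  col k (setc X j x) = if k == j then x else col k X.
Proof. by apply/matrixP => r s; rewrite !mxE (ord1 s); case: (k == j); rewrite ?mxE. Qed.

Definition orthoS {R : rcfType} n (S : {set 'I_n}) (X : 'M[R]_n) :=
  forall i k, i \in S -> k \in S -> dotc (col i X) (col k X) = (i == k)%:R.

Lemma build {R : rcfType} n (H : {set 'I_n} -> 'M[R]_n -> Prop) :
  H set0 0 ->
  (forall S X j, orthoS S X -> H S X -> j \notin S ->
     exists x : 'cV[R]_n, [/\ dotc x x = 1,
       (forall i, i \in S -> dotc (col i X) x = 0) & H (j |: S) (setc X j x)]) ->
  exists X : 'M[R]_n, X^T *m X = 1%:M /\ H setT X.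
Proof.
move=> H0 Hs.
have claim m : (m <= n)%N -> exists (S : {set 'I_n}) (X : 'M[R]_n), [/\ #|S| = m, orthoS S X & H S X].
  elim: m => [_|m IH lemn].
    by exists set0, 0; split; rewrite ?cards0 // => i k; rewrite inE.
  have [S [X [cS oS hS]]] := IH (ltnW lemn).
  case: (pickP (fun j => j \notin S)) => [j jS|allS]; last first.
    suff : #|S| = n by rewrite cS => e; rewrite e ltnn in lemn.
    have -> : S = setT by apply/setP => i; rewrite inE; have := allS i => /= /negbFE.
    by rewrite cardsT card_ord.
  have [x [xx xo hx]] := Hs S X j oS hS jS.
  exists (j |: S), (setc X j x); split => //.
    by rewrite cardsU1 jS cS.
  move=> i k; rewrite !col_setc.
  case: (eqVneq i j) => [->|ij]; case: (eqVneq k j) => [->|kj] => hi hk.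
  - by rewrite xx.
  - rewrite dotcC xo //; by move: hk; rewrite in_setU1 (negbTE kj).
  - rewrite xo //; by move: hi; rewrite in_setU1 (negbTE ij).
  - apply: oS.
      by move: hi; rewrite in_setU1 (negbTE ij).
    by move: hk; rewrite in_setU1 (negbTE kj).
have [S [X [cS oS hS]]] := claim n (leqnn n).
have ST : S = setT.
  by apply/eqP; rewrite eqEcard subsetT cardsT card_ord cS leqnn.
exists X; split; last by rewrite -ST.
apply/matrixP => i k; rewrite trmul_dotc oS ?ST ?inE // mxE //.
Qed.

Lemma cReD {R : rcfType} (x y : R[i]) : complex.Re (x + y) = complex.Re x + complex.Re y.
Proof. by case: x; case: y. Qed.
Lemma cImD {R : rcfType} (x y : R[i]) : complex.Im (x + y) = complex.Im x + complex.Im y.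
Proof. by case: x; case: y. Qed.
Lemma cReMr {R : rcfType} (x : R[i]) (c : R) : complex.Re (x * (c%:C)%C) = complex.Re x * c.
Proof. by case: x => a b /=; rewrite mulr0 subr0. Qed.
Lemma cImMr {R : rcfType} (x : R[i]) (c : R) : complex.Im (x * (c%:C)%C) = complex.Im x * c.
Proof. by case: x => a b /=; rewrite mulr0 add0r. Qed.
Lemma cReMl {R : rcfType} (l x : R[i]) :
  complex.Re (l * x) = complex.Re l * complex.Re x - complex.Im l * complex.Im x.
Proof. by case: x => a b; case: l => c d. Qed.
Lemma cImMl {R : rcfType} (l x : R[i]) :
  complex.Im (l * x) = complex.Re l * complex.Im x + complex.Im l * complex.Re x.
Proof. by case: x => a b; case: l => c d. Qed.

Lemma cRe_sum {R : rcfType} m (F : 'I_m -> R[i]) : complex.Re (\sum_k F k) = \sum_k complex.Re (F k).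
Proof. by apply: (big_morph _ cReD). Qed.
Lemma cIm_sum {R : rcfType} m (F : 'I_m -> R[i]) : complex.Im (\sum_k F k) = \sum_k complex.Im (F k).
Proof. by apply: (big_morph _ cImD). Qed.

Lemma mapRe_mul {R : rcfType} p m q (w : 'M[R[i]]_(p, m)) (M : 'M[R]_(m, q)) :
  map_mx (@complex.Re R) (w *m map_mx (real_complex R) M) = map_mx (@complex.Re R) w *m M.
Proof.
apply/matrixP => i j; rewrite !mxE cRe_sum; apply: eq_bigr => k _; by rewrite !mxE cReMr.
Qed.
Lemma mapIm_mul {R : rcfType} p m q (w : 'M[R[i]]_(p, m)) (M : 'M[R]_(m, q)) :
  map_mx (@complex.Im R) (w *m map_mx (real_complex R) M) = map_mx (@complex.Im R) w *m M.
Proof.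
apply/matrixP => i j; rewrite !mxE cIm_sum; apply: eq_bigr => k _; by rewrite !mxE cImMr.
Qed.

Lemma cplx_eq0 {R : rcfType} n (u : 'rV[R[i]]_n) :
  map_mx (@complex.Re R) u = 0 -> map_mx (@complex.Im R) u = 0 -> u = 0.
Proof.
move=> /rowP a0 /rowP b0; apply/rowP => j; have := a0 j; have := b0 j.
by rewrite !mxE; case: (u 0 j) => x y /= -> ->.
Qed.

Definition rdot {R : rcfType} n (u v : 'rV[R]_n) : R := \sum_j u 0 j * v 0 j.

Lemma rdot_mul {R : rcfType} n (u v : 'rV[R]_n) : (u *m v^T) 0 0 = rdot u v.
Proof. by rewrite mxE; apply: eq_bigr => j _; rewrite mxE. Qed.

Lemma rdot_ge0 {R : rcfType} n (u : 'rV[R]_n) : 0 <= rdot u u.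
Proof. by apply: sumr_ge0 => j _; rewrite -expr2 sqr_ge0. Qed.

Lemma rdot_gt0 {R : rcfType} n (u : 'rV[R]_n) : u != 0 -> 0 < rdot u u.
Proof.
move=> un0; rewrite lt_def rdot_ge0 andbT; apply: contraNN un0 => /eqP.
move=> /eqP; rewrite psumr_eq0 => [/allP H|j _]; last by rewrite -expr2 sqr_ge0.
apply/eqP/rowP => j; rewrite mxE.
by have := H j (mem_index_enum _); rewrite /= -expr2 sqrf_eq0 => /eqP.
Qed.

Lemma rdot_linl {R : rcfType} n (x y : R) (u v w : 'rV[R]_n) :
  rdot (x *: u + y *: v) w = x * rdot u w + y * rdot v w.
Proof.
rewrite /rdot !mulr_sumr -big_split; apply: eq_bigr => j _; rewrite !mxE /=; ring.
Qed.
Lemma rdot_linr {R : rcfType} n (x y : R) (u v w : 'rV[R]_n) :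
  rdot w (x *: u + y *: v) = x * rdot w u + y * rdot w v.
Proof.
rewrite /rdot !mulr_sumr -big_split; apply: eq_bigr => j _; rewrite !mxE /=; ring.
Qed.

Lemma unit_of_row {R : rcfType} n (A A0 : 'M[R]_n) (y : 'rV[R]_n) e :
  A^T = A -> y != 0 -> y *m A = e *: y -> y *m A0^T = 0 ->
  exists x : 'cV[R]_n, [/\ dotc x x = 1, A0 *m x = 0 & exists e, A *m x = e *: x].
Proof.
move=> AT yn0 yA yK.
have sp := rdot_gt0 yn0.
set c := (Num.sqrt (rdot y y))^-1.
exists (c *: y^T); split.
- rewrite dotcE.
  have -> : \sum_r (c *: y^T) r 0 * (c *: y^T) r 0 = c ^+ 2 * rdot y y.
    rewrite /rdot mulr_sumr; apply: eq_bigr => r _; rewrite !mxE; ring.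
  rewrite /c exprVn sqr_sqrtr ?mulVf //; first by rewrite gt_eqF.
  exact: ltW.
- by rewrite -scalemxAr -{1}(trmxK A0) -trmx_mul yK trmx0 scaler0.
- exists e; rewrite -scalemxAr -{1}AT -trmx_mul yA linearZ /= scalerA mulrC -scalerA.
  by [].
Qed.

Lemma ext {R : rcfType} n (A A0 : 'M[R]_n) (c : 'rV[R]_n) :
  A^T = A -> A0 *m A = diag_mx c *m A0 -> \det A0 = 0 ->
  exists x : 'cV[R]_n, [/\ dotc x x = 1, A0 *m x = 0 & exists e, A *m x = e *: x].
Proof.
move=> AT A0A dA0.
set K0 := kermx A0^T.
have rk : (0 < \rank K0)%N.
  rewrite mxrank_ker mxrank_tr subn_gt0 ltn_neqAle rank_leq_col andbT.
  apply/negP => /eqP rf.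
  have : A0 \in unitmx by rewrite -row_free_unit /row_free rf.
  by rewrite unitmxE dA0 unitr0.
set B := row_base K0.
have BK : B *m A0^T = 0.
  by apply/eqP; rewrite -sub_kermx eq_row_base.
have AA0 : A *m A0^T = A0^T *m diag_mx c.
  by rewrite -{1}AT -trmx_mul A0A trmx_mul tr_diag_mx.
have BA : (B *m A <= B)%MS.
  by rewrite eq_row_base sub_kermx -mulmxA AA0 mulmxA BK mul0mx.
have [D BAD] := submxP BA.
set f := real_complex R.
have [l rl] : exists l, root (char_poly (map_mx f D)) l.
  by apply/closed_rootP; rewrite size_char_poly; case: (\rank K0) rk.
have /eigenvalueP [w wD wn0] : eigenvalue (map_mx f D) l by rewrite eigenvalue_root_char.
set v := w *m map_mx f B.
have vA : v *m map_mx f A = l *: v.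
  by rewrite /v -mulmxA -map_mxM BAD map_mxM mulmxA wD scalemxAl.
have vn0 : v != 0.
  by rewrite /v mulmx_free_eq0 // /row_free mxrank_map; exact: row_base_free.
set a := map_mx (@complex.Re R) v.
set b := map_mx (@complex.Im R) v.
set al := complex.Re l. set be := complex.Im l.
have aA : a *m A = al *: a - be *: b.
  by rewrite /a -mapRe_mul vA; apply/rowP => j; rewrite !mxE cReMl.
have bA : b *m A = be *: a + al *: b.
  by rewrite /b -mapIm_mul vA; apply/rowP => j; rewrite !mxE cImMl addrC.
have aK : a *m A0^T = 0.
  by rewrite /a /v mapRe_mul -mulmxA BK mulmx0.
have bK : b *m A0^T = 0.
  by rewrite /b /v mapIm_mul -mulmxA BK mulmx0.
have abn0 : (a != 0) || (b != 0).
  apply: contraNT vn0; rewrite negb_or !negbK => /andP [/eqP a0 /eqP b0].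
  by apply/eqP; apply: cplx_eq0.
have be0 : be = 0.
  have e1 : rdot (a *m A) b = rdot a (b *m A).
    by rewrite -!rdot_mul trmx_mul AT mulmxA.
  rewrite aA bA -scaleNr rdot_linl rdot_linr in e1.
  have pos : 0 < rdot a a + rdot b b.
    case/orP: abn0 => h.
      by have := rdot_gt0 h; have := rdot_ge0 b; lra.
    by have := rdot_gt0 h; have := rdot_ge0 a; lra.
  have hb : be * (rdot a a + rdot b b) = 0 by lra.
  move/eqP: hb; rewrite mulf_eq0 => /orP [/eqP //|h].
  by move: pos; rewrite (eqP h) ltxx.
case/orP: abn0 => h.
  by apply: (@unit_of_row _ _ A A0 a al) => //; rewrite aA be0 scale0r subr0.
by apply: (@unit_of_row _ _ A A0 b al) => //; rewrite bA be0 scale0r add0r.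
Qed.

Lemma det_zero_row {R : rcfType} n (A0 : 'M[R]_n) j : row j A0 = 0 -> \det A0 = 0.
Proof.
move=> rj; apply/eqP/det0P; exists (delta_mx 0 j); last by rewrite -rowE.
by apply/negP => /eqP /matrixP /(_ 0 j); rewrite !mxE !eqxx /= => /eqP; rewrite oner_eq0.
Qed.

Lemma mulmx_dotc {R : rcfType} n (X : 'M[R]_n) (x : 'cV[R]_n) (S : {set 'I_n}) i :
  i \in S -> ((\matrix_(i, r) if i \in S then X r i else 0) *m x) i 0 = dotc (col i X) x.
Proof.
move=> iS; rewrite dotcE mxE; apply: eq_bigr => r _; by rewrite !mxE iS.
Qed.

Lemma spectral {R : rcfType} n (A : 'M[R]_n) : A^T = A ->
  exists (Z : 'M[R]_n) (d : 'rV[R]_n), Z^T *m Z = 1%:M /\ A *m Z = Z *m diag_mx d.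
Proof.
move=> AT.
pose H := fun (S : {set 'I_n}) (X : 'M[R]_n) =>
  forall i, i \in S -> A *m col i X = dotc (col i X) (A *m col i X) *: col i X.
have [X [XX HX]] : exists X : 'M[R]_n, X^T *m X = 1%:M /\ H setT X.
  apply: build; first by move=> i; rewrite inE.
  move=> S X j oS hS jS.
  set A0 := \matrix_(i, r) if i \in S then X r i else 0.
  set c := \row_i (if i \in S then dotc (col i X) (A *m col i X) else 0).
  have A0A : A0 *m A = diag_mx c *m A0.
    apply/matrixP => i r'; rewrite mul_diag_mx !mxE.
    case: (boolP (i \in S)) => iS; last by rewrite mul0r big1 // => r _; rewrite mxE (negbTE iS) mul0r.
    move/colP: (hS i iS) => /(_ r'); rewrite !mxE => <-.
    apply: eq_bigr => r _; rewrite !mxE iS mulrC; congr (_ * _).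
    by rewrite -{1}AT mxE.
  have dA0 : \det A0 = 0.
    apply: (det_zero_row (j := j)); apply/rowP => r; by rewrite !mxE (negbTE jS).
  have [x [xx A0x [e Ax]]] := ext (esym (esym AT)) A0A dA0.
  exists x; split => //.
    move=> i iS; rewrite -(mulmx_dotc X x iS) -/A0 A0x mxE //.
  move=> i; rewrite in_setU1 col_setc; case: (eqVneq i j) => [->|ij] /= hi.
    by rewrite Ax /dotc -scalemxAr mxE mulrC -/(dotc x x) xx mul1r.
  exact: hS.
exists X, (\row_i dotc (col i X) (A *m col i X)); split => //.
apply/matrixP => r i; rewrite mul_mx_diag.
move/colP: (HX i (in_setT i)) => /(_ r) h; rewrite !mxE in h.
rewrite !mxE mulrC -h; apply: eq_bigr => k _; by rewrite mxE.
Qed.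

Lemma sq_col {R : rcfType} n (x : 'cV[R]_n) : sq x = dotc x x.
Proof. by rewrite /sq dotcE; apply: eq_bigr => r _; rewrite big_ord1 expr2. Qed.

Lemma dotcZl {R : rcfType} n (a : R) (u v : 'cV[R]_n) : dotc (a *: u) v = a * dotc u v.
Proof. by rewrite !dotcE mulr_sumr; apply: eq_bigr => r _; rewrite mxE mulrA. Qed.
Lemma dotcZr {R : rcfType} n (a : R) (u v : 'cV[R]_n) : dotc u (a *: v) = a * dotc u v.
Proof. by rewrite dotcC dotcZl dotcC. Qed.

Lemma col_mulmx {R : rcfType} m n p (A : 'M[R]_(m, n)) (B : 'M[R]_(n, p)) i :
  col i (A *m B) = A *m col i B.
Proof. by rewrite !colE mulmxA. Qed.

Lemma polar {R : rcfType} K (M : 'M[R]_K) :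
  (forall x : 'cV[R]_K, sq (M *m x) <= sq x) ->
  exists O : 'M[R]_K, O^T *m O = 1%:M /\ sq M <= \tr (O^T *m M).
Proof.
move=> Mc.
have MT : (M^T *m M)^T = M^T *m M by rewrite trmx_mul trmxK.
have [Q [s [QQ hQ]]] := spectral MT.
set N := M *m Q.
have NN : N^T *m N = diag_mx s.
  by rewrite /N trmx_mul -mulmxA (mulmxA M^T) hQ mulmxA QQ mul1mx.
have Nik i k : dotc (col i N) (col k N) = (i == k)%:R * s 0 i.
  by rewrite -trmul_dotc NN mxE mulr_natl.
have s_ge0 i : 0 <= s 0 i.
  by have := Nik i i; rewrite eqxx mul1r => <-; rewrite -sq_col sq_ge0.
have s_le1 i : s 0 i <= 1.
  have := Nik i i; rewrite eqxx mul1r => <-; rewrite -sq_col /N col_mulmx.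
  apply: le_trans (Mc _) _; rewrite sq_col -trmul_dotc QQ mxE eqxx.
  by [].
pose H := fun (S : {set 'I_K}) (X : 'M[R]_K) =>
  forall i, i \in S -> dotc (col i X) (col i N) = Num.sqrt (s 0 i) /\
     forall k, k \notin S -> dotc (col i X) (col k N) = 0.
have [U [UU HU]] : exists U : 'M[R]_K, U^T *m U = 1%:M /\ H setT U.
  apply: build; first by move=> i; rewrite inE.
  move=> S X j oS hS jS.
  have [sj0|sjn0] := eqVneq (s 0 j) 0.
  - have Nj0 : col j N = 0.
      by apply: sq_eq0; rewrite sq_col Nik eqxx mul1r.
    set A0 := \matrix_(i, r) if i \in S then X r i else if i == j then 0 else N r i.
    have A0A : A0 *m 0 = diag_mx 0 *m A0.
      by rewrite mulmx0; apply/matrixP => i r; rewrite mul_diag_mx !mxE mul0r.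
    have dA0 : \det A0 = 0.
      by apply: (det_zero_row (j := j)); apply/rowP => r; rewrite !mxE (negbTE jS) eqxx.
    have [x [xx A0x _]] := ext (trmx0 _ _ _ : (0 : 'M[R]_K)^T = 0) A0A dA0.
    have hA0 i : (A0 *m x) i 0 = if i \in S then dotc (col i X) x
                   else if i == j then 0 else dotc (col i N) x.
      rewrite mxE; case: ifP => iS.
        by rewrite dotcE; apply: eq_bigr => r _; rewrite !mxE iS.
      case: ifP => ij.
        by rewrite big1 // => r _; rewrite mxE iS ij mul0r.
      by rewrite dotcE; apply: eq_bigr => r _; rewrite !mxE iS ij.
    exists x; split => //.
      by move=> i iS; have := hA0 i; rewrite A0x iS mxE.
    move=> i; rewrite in_setU1 col_setc; case: (eqVneq i j) => [->|ij] /= hi.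
      split; first by rewrite Nj0 sj0 sqrtr0 dotcC dotcE big1 // => r _; rewrite mxE mul0r.
      move=> k; rewrite in_setU1 negb_or => /andP [kj kS].
      by have := hA0 k; rewrite A0x (negbTE kS) (negbTE kj) mxE dotcC.
    have [h1 h2] := hS i hi; split => // k.
    by rewrite in_setU1 negb_or => /andP [_ kS]; apply: h2.
  - have sjp : 0 < s 0 j by rewrite lt_def sjn0 s_ge0.
    have sqp : 0 < Num.sqrt (s 0 j) by rewrite sqrtr_gt0.
    exists ((Num.sqrt (s 0 j))^-1 *: col j N); split.
    + rewrite dotcZl dotcZr Nik eqxx mul1r.
      rewrite mulrA -expr2 exprVn sqr_sqrtr ?mulVf //; exact: ltW.
    + move=> i iS; rewrite dotcZr; have [_ h2] := hS i iS; by rewrite h2 ?mulr0.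
    + move=> i; rewrite in_setU1 col_setc; case: (eqVneq i j) => [->|ij] /= hi.
        split.
          rewrite dotcZl Nik eqxx mul1r -{2}(sqr_sqrtr (ltW sjp)) expr2 mulrA mulVf //.
            by rewrite mul1r.
          by rewrite gt_eqF.
        move=> k; rewrite in_setU1 negb_or => /andP [kj kS].
        by rewrite dotcZl Nik eq_sym (negbTE kj) mul0r mulr0.
      have [h1 h2] := hS i hi; split => // k.
      by rewrite in_setU1 negb_or => /andP [_ kS]; apply: h2.
exists (U *m Q^T); split.
  by rewrite trmx_mul trmxK mulmxA -(mulmxA Q) UU mulmx1 (mulmx1C QQ).
have -> : \tr ((U *m Q^T)^T *m M) = \sum_i Num.sqrt (s 0 i).
  rewrite trmx_mul trmxK -mulmxA mxtrace_mulC -mulmxA -/N /mxtrace.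
  by apply: eq_bigr => i _; rewrite trmul_dotc; have [h1 _] := HU i (in_setT i).
have -> : sq M = \sum_i s 0 i.
  rewrite -mxtrace_diag -NN /N trmx_mul -mulmxA mxtrace_mulC !mulmxA.
  by rewrite -(mulmxA _ Q Q^T) (mulmx1C QQ) mulmx1 sqE'.
apply: ler_sum => i _.
have h := sqr_sqrtr (s_ge0 i); have h0 := sqrtr_ge0 (s 0 i); have h1 := s_le1 i.
nra.
Qed.

Lemma frobN {R : rcfType} m n (A : 'M[R]_(m, n)) : frob (- A) = frob A.
Proof. exact: (congr1 Num.sqrt (sqN A)). Qed.

Lemma distmat_sym {R : rcfType} n T (P : 'I_T -> 'M[R]_n) : (distmat P)^T = distmat P.
Proof. by apply/matrixP => i j; rewrite !mxE -opprB frobN. Qed.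

Lemma proj_idem {R : rcfType} T K (V : 'M[R]_(T, K)) : V^T *m V = 1%:M ->
  (V *m V^T) *m (V *m V^T) = V *m V^T.
Proof. by move=> VV; rewrite mulmxA -(mulmxA V) VV mulmx1. Qed.

Lemma proj_sym {R : rcfType} T K (V : 'M[R]_(T, K)) : (V *m V^T)^T = V *m V^T.
Proof. by rewrite trmx_mul trmxK. Qed.

Lemma cproj_idem {R : rcfType} T K (V : 'M[R]_(T, K)) : V^T *m V = 1%:M ->
  (1%:M - V *m V^T) *m (1%:M - V *m V^T) = 1%:M - V *m V^T.
Proof.
move=> VV; rewrite mulmxBl mul1mx mulmxBr mulmx1 proj_idem // subrr subr0 //.
Qed.

Lemma cproj_sym {R : rcfType} T K (V : 'M[R]_(T, K)) : (1%:M - V *m V^T)^T = 1%:M - V *m V^T.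
Proof. by rewrite linearB /= trmx1 proj_sym. Qed.

Lemma cproj_V {R : rcfType} T K (V : 'M[R]_(T, K)) : V^T *m V = 1%:M ->
  V^T *m (1%:M - V *m V^T) = 0.
Proof. by move=> VV; rewrite mulmxBr mulmx1 mulmxA VV mul1mx subrr. Qed.

Lemma eig_comm {R : rcfType} T K (A : 'M[R]_T) (V : 'M[R]_(T, K)) lam :
  A^T = A -> A *m V = V *m diag_mx lam -> A *m (V *m V^T) = (V *m V^T) *m A.
Proof.
move=> AT AV; rewrite mulmxA AV -!mulmxA; congr (V *m _).
by rewrite -[X in _ = _ *m X]AT -trmx_mul AV trmx_mul tr_diag_mx.
Qed.

Lemma ccomm {R : rcfType} T K (A : 'M[R]_T) (V : 'M[R]_(T, K)) lam :
  A^T = A -> A *m V = V *m diag_mx lam ->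
  A *m (1%:M - V *m V^T) = (1%:M - V *m V^T) *m A.
Proof.
move=> AT AV; by rewrite mulmxBr mulmxBl mulmx1 mul1mx (eig_comm AT AV).
Qed.

Lemma G_eq {R : rcfType} T K (A : 'M[R]_T) (V : 'M[R]_(T, K)) lam :
  A^T = A -> V^T *m V = 1%:M -> A *m V = V *m diag_mx lam ->
  (1%:M - V *m V^T) *m A *m (1%:M - V *m V^T) = A *m (1%:M - V *m V^T).
Proof.
move=> AT VV AV; by rewrite -(ccomm AT AV) -mulmxA cproj_idem.
Qed.

Lemma compl_eig {R : rcfType} T K (A : 'M[R]_T) (V : 'M[R]_(T, K)) lam
  (Z : 'M[R]_T) (mu : 'rV[R]_T) :
  A^T = A -> V^T *m V = 1%:M -> A *m V = V *m diag_mx lam ->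
  (1%:M - V *m V^T) *m A *m (1%:M - V *m V^T) *m Z = Z *m diag_mx mu ->
  forall i, mu 0 i != 0 -> V^T *m col i Z = 0 /\ A *m col i Z = mu 0 i *: col i Z.
Proof.
move=> AT VV AV GZ i mi.
set Q := 1%:M - V *m V^T.
have Gz : Q *m A *m Q *m col i Z = mu 0 i *: col i Z.
  rewrite -col_mulmx GZ mul_mx_diag; apply/colP => r; by rewrite !mxE mulrC.
have Vz : V^T *m col i Z = 0.
  have : V^T *m (Q *m A *m Q *m col i Z) = 0.
    by rewrite !mulmxA cproj_V // !mul0mx.
  rewrite Gz -scalemxAr => /eqP; rewrite scaler_eq0 (negbTE mi) /= => /eqP //.
split => //.
have Qz : Q *m col i Z = col i Z.
  by rewrite /Q mulmxBl mul1mx -mulmxA Vz mulmx0 subr0.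
by rewrite -Gz (G_eq AT VV AV) -mulmxA Qz.
Qed.

Lemma top_abs_use {R : rcfType} T K (A : 'M[R]_T) (V : 'M[R]_(T, K)) lam
  (Z : 'M[R]_T) (mu : 'rV[R]_T) :
  top_abs_eigvecs A V lam -> A^T = A -> Z^T *m Z = 1%:M ->
  (1%:M - V *m V^T) *m A *m (1%:M - V *m V^T) *m Z = Z *m diag_mx mu ->
  forall i, mu 0 i != 0 -> forall k, `|mu 0 i| <= `|lam 0 k|.
Proof.
move=> [VV AV top] AT ZZ GZ i mi k.
have [h1 h2] := compl_eig AT VV AV GZ mi.
apply: (top _ _ h1 _ h2).
have h : dotc (col i Z) (col i Z) = 1 by rewrite -trmul_dotc ZZ mxE eqxx.
apply/negP => /eqP z0; move: h; rewrite z0 dotcE big1 => [|r _]; last by rewrite mxE mul0r.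
by move/eqP; rewrite eq_sym oner_eq0.
Qed.

Lemma rank_lt_of_det0 {R : rcfType} n (A : 'M[R]_n) : \det A = 0 -> (\rank A < n)%N.
Proof.
move=> d0; rewrite ltn_neqAle rank_leq_col andbT; apply/negP => /eqP rf.
have : A \in unitmx by rewrite -row_free_unit /row_free rf.
by rewrite unitmxE d0 unitr0.
Qed.

Lemma trZ {R : rcfType} m n (a : R) (A : 'M[R]_(m, n)) : (a *: A)^T = a *: A^T.
Proof. by apply/matrixP => i j; rewrite !mxE. Qed.

Lemma D_struct {R : rcfType} T K (D : 'M[R]_T) (V : 'M[R]_(T, K)) (lam : 'rV[R]_K) :
  top_abs_eigvecs D V lam -> D^T = D -> \rank D = K ->
  (forall k, lam 0 k != 0) /\ D *m (1%:M - V *m V^T) = 0.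
Proof.
move=> top DT rD; have [VV DV topP] := top.
set Q := 1%:M - V *m V^T.
have GT : (Q *m D *m Q)^T = Q *m D *m Q.
  by rewrite !trmx_mul cproj_sym DT mulmxA.
have [Z [mu [ZZ GZ]]] := spectral GT.
case: (pickP (fun i => mu 0 i != 0)) => [i mi|allz]; last first.
  have GZ0 : Q *m D *m Q *m Z = 0.
    rewrite GZ; apply/matrixP => r k; rewrite mul_mx_diag !mxE.
    by have := allz k => /= /negbFE /eqP ->; rewrite mulr0.
  have G0 : D *m Q = 0.
    rewrite -(G_eq DT VV DV) -/Q -(mulmx1 (Q *m D *m Q)) -(mulmx1C ZZ) mulmxA GZ0 mul0mx //.
  split => // k; apply/negP => /eqP l0.
  have DE : D = V *m diag_mx lam *m V^T.
    by rewrite -DV -mulmxA -[LHS]mulmx1 -(subrK (V *m V^T) 1%:M) mulmxDr -/Q G0 add0r.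
  have : (\rank D < K)%N.
    rewrite DE; apply: leq_ltn_trans (mxrankM_maxl _ _) _.
    apply: leq_ltn_trans (mxrankM_maxr _ _) _.
    by apply: rank_lt_of_det0; rewrite det_diag (bigD1 k) //= l0 mul0r.
  by rewrite rD ltnn.
exfalso.
have lnz k : lam 0 k != 0.
  have := top_abs_use top DT ZZ GZ mi k.
  apply: contraTneq => ->; rewrite normr0 -ltNge normr_gt0 //.
have [Vz Dz] := compl_eig DT VV DV GZ mi.
set z := col i Z.
have zz : z^T *m z = 1%:M.
  apply/matrixP => a b; rewrite (ord1 a) (ord1 b).
  change (dotc z z = (1%:M : 'M[R]_1) 0 0).
  by rewrite /z -trmul_dotc ZZ !mxE eqxx.
set X := D *m row_mx V z.
have XE : X = row_mx (V *m diag_mx lam) (mu 0 i *: z) by rewrite /X mul_mx_row DV Dz.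
have zV : z^T *m V = 0 by rewrite -(trmxK V) -trmx_mul Vz trmx0.
have XX : X^T *m X = block_mx (diag_mx lam *m diag_mx lam) 0 0 ((mu 0 i ^+ 2)%:M).
  rewrite XE tr_row_mx mul_col_row !trmx_mul tr_diag_mx.
  congr block_mx.
  - by rewrite -mulmxA (mulmxA V^T) VV mul1mx.
  - by rewrite -mulmxA -scalemxAr Vz scaler0 mulmx0.
  - by rewrite trZ -scalemxAl mulmxA zV mul0mx scaler0.
  - by rewrite trZ -scalemxAl -scalemxAr zz scalerA -expr2 scalemx1.
have uX : X^T *m X \in unitmx.
  rewrite unitmxE XX det_ublock det_mulmx det_diag det_scalar1 unitfE.
  rewrite !mulf_neq0 // ?expf_neq0 //; by rewrite prodf_seq_neq0; apply/allP => k _ /=.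
have := mxrank_unit uX.
move=> h; have : (K + 1 <= \rank D)%N.
  by rewrite -h; apply: leq_trans (mxrankM_maxr _ _) (mxrankM_maxl _ _).
by rewrite rD addn1 ltnn.
Qed.

Lemma E_bound {R : rcfType} n T (P Ph : 'I_T -> 'M[R]_n) :
  sq (distmat Ph - distmat P) <= 4 * T%:R * \sum_(i < T) frob (Ph i - P i) ^+ 2.
Proof.
set a := fun i => frob (Ph i - P i).
have ent i j : (distmat Ph - distmat P) i j ^+ 2 <= 2 * a i ^+ 2 + 2 * a j ^+ 2.
  rewrite !mxE.
  set d := frob (Ph i - Ph j) - frob (P i - P j).
  have h1 := frob_rev (Ph i - Ph j) (P i - P j).
  have e : Ph i - Ph j - (P i - P j) = (Ph i - P i) + - (Ph j - P j).
    by rewrite !opprB addrACA [in RHS]addrACA [- P i + _]addrC.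
  have h2 := frob_triangle (Ph i - P i) (- (Ph j - P j)).
  rewrite -e frobN in h2.
  have h3 := le_trans h1 h2.
  have ha := frob_ge0 (Ph i - P i); have hb := frob_ge0 (Ph j - P j).
  rewrite -(real_normK (num_real d)).
  have hn := normr_ge0 d.
  have h4 : `|d| ^+ 2 <= (frob (Ph i - P i) + frob (Ph j - P j)) ^+ 2.
    by rewrite ler_pXn2r ?nnegrE ?addr_ge0.
  apply: le_trans h4 _; rewrite /a -subr_ge0.
  set x := frob (Ph i - P i); set y := frob (Ph j - P j).
  have -> : 2 * x ^+ 2 + 2 * y ^+ 2 - (x + y) ^+ 2 = (x - y) ^+ 2 by ring.
  exact: sqr_ge0.
have H1 : sq (distmat Ph - distmat P) <=
    \sum_(i < T) \sum_(j < T) (2 * a i ^+ 2 + 2 * a j ^+ 2).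
  by apply: ler_sum => i _; apply: ler_sum => j _; exact: ent.
apply: le_trans H1 _.
rewrite (eq_bigr (fun i => (2 * T%:R) * a i ^+ 2 + 2 * \sum_(j < T) a j ^+ 2)); last first.
  move=> i _; rewrite big_split /= sumr_const card_ord -mulr_sumr; congr (_ + _).
  by rewrite -mulr_natr; ring.
rewrite big_split /= -mulr_sumr sumr_const card_ord -mulr_natr.
rewrite /a; lra.
Qed.


Lemma sq_diag_lb' {R : rcfType} m n (X : 'M[R]_(m, n)) (d : 'rV[R]_n) (c : R) :
  (forall i j, c * X i j ^+ 2 <= (X i j * d 0 j) ^+ 2) -> c * sq X <= sq (X *m diag_mx d).
Proof.
move=> h; rewrite /sq mulr_sumr; apply: ler_sum => i _; rewrite mulr_sumr.
by apply: ler_sum => j _; rewrite mul_mx_diag mxE.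
Qed.

Lemma sq_cproj {R : rcfType} T K p (V : 'M[R]_(T, K)) (Y : 'M[R]_(T, p)) :
  V^T *m V = 1%:M -> sq ((1%:M - V *m V^T) *m Y) = sq Y - sq (V^T *m Y).
Proof.
move=> VV; rewrite sq_proj_tr ?cproj_sym ?cproj_idem //.
rewrite mulmxBr mulmx1 mulmxBl linearB /=.
by rewrite !sqE' trmx_mul trmxK !mulmxA.
Qed.

Lemma proj2 {R : rcfType} T p q (A : 'M[R]_(T, p)) (B : 'M[R]_(T, q)) :
  A^T *m A = 1%:M -> A^T *m B = 0 -> B^T *m B *m B^T = B^T ->
  (A *m A^T + B *m B^T)^T = A *m A^T + B *m B^T /\
  (A *m A^T + B *m B^T) *m (A *m A^T + B *m B^T) = A *m A^T + B *m B^T.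
Proof.
move=> AA AB BB; split; first by rewrite linearD /= !trmx_mul !trmxK.
have BA : B^T *m A = 0 by rewrite -(trmxK A) -trmx_mul AB trmx0.
rewrite mulmxDl !mulmxDr.
rewrite !mulmxA -(mulmxA A A^T A) AA mulmx1 -(mulmxA A A^T B) AB mulmx0 mul0mx addr0.
rewrite -(mulmxA B B^T A) BA mulmx0 mul0mx add0r -(mulmxA B B^T B) -(mulmxA B) BB //.
Qed.

Lemma dotm_tr {R : rcfType} m n (A B : 'M[R]_(m, n)) : dotm A B = \tr (A^T *m B).
Proof.
rewrite /dotm /mxtrace exchange_big; apply: eq_bigr => j _; rewrite mxE.
by apply: eq_bigr => i _; rewrite mxE.
Qed.

Lemma gap {R : rcfType} (mu l g : R) : `|mu| <= g / 2 -> g <= `|l| -> 0 <= g ->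
  g ^+ 2 / 4 <= (mu - l) ^+ 2.
Proof.
move=> hm hl hg.
have h1 : `|l| <= `|l - mu| + `|mu|.
  by have := ler_normD (l - mu) mu; rewrite subrK.
have h2 : g / 2 <= `|mu - l| by rewrite distrC; lra.
have h3 : 0 <= g / 2 by lra.
have h4 : (g / 2) ^+ 2 <= `|mu - l| ^+ 2 by rewrite ler_pXn2r ?nnegrE ?normr_ge0.
rewrite -[(mu - l) ^+ 2]real_normK ?num_real //; apply: le_trans h4.
rewrite expr_div_n; lra.
Qed.

Unset Implicit Arguments.

Theorem theorem1 (R : rcfType) (n T K : nat)
  (P Ph : 'I_T -> 'M[R]_n)
  (V Vh : 'M[R]_(T, K)) (lam lamh : 'rV[R]_K) (gamma : R) :
  (0 < n)%N -> (0 < T)%N -> (0 < K)%N ->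
  \rank (distmat P) = K ->
  top_abs_eigvecs (distmat P) V lam ->
  top_abs_eigvecs (distmat Ph) Vh lamh ->
  (exists k : 'I_K, gamma = `|lam 0 k|) ->
  (forall k : 'I_K, gamma <= `|lam 0 k|) ->
  exists O : 'M[R]_K,
    O^T *m O = 1%:M /\
    frob (Vh *m O - V) ^+ 2
      <= 64 * T%:R / gamma ^+ 2 * \sum_(i < T) frob (Ph i - P i) ^+ 2.
Proof.
move=> n0 T0 K0 rD topD topDh [k0 gk0] gle.
have DT := distmat_sym P; have DhT := distmat_sym Ph.
set D := distmat P in rD topD DT *; set Dh := distmat Ph in topDh DhT *.
have [VV DV _] := topD; have [VhVh DhVh _] := topDh.
have [lnz DQ0] := D_struct topD DT rD.
have gpos : 0 < gamma by rewrite gk0 normr_gt0.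
set E := Dh - D.
set Qv := 1%:M - V *m V^T.
set Qh := 1%:M - Vh *m Vh^T.
have QhT : Qh^T = Qh := cproj_sym Vh.
have QhQh : Qh *m Qh = Qh := cproj_idem VhVh.
have QvT : Qv^T = Qv := cproj_sym V.
have QvQv : Qv *m Qv = Qv := cproj_idem VV.
have GT : (Qh *m Dh *m Qh)^T = Qh *m Dh *m Qh.
  by rewrite !trmx_mul QhT DhT mulmxA.
have [Z [mu [ZZ GZ]]] := spectral GT.
have ZZt : Z *m Z^T = 1%:M := mulmx1C ZZ.
have Gz := compl_eig DhT VhVh DhVh GZ.
have topu := top_abs_use topDh DhT ZZ GZ.
set Y := Qh *m Z.
have YT : Y^T = Z^T *m Qh by rewrite trmx_mul QhT.
have YD : Y^T *m Dh = diag_mx mu *m Y^T.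
  have GQ : Qh *m Dh *m Qh *m Qh = Qh *m Dh *m Qh by rewrite -mulmxA QhQh.
  have QD : Qh *m Dh = Qh *m Dh *m Qh by rewrite (G_eq DhT VhVh DhVh) (ccomm DhT DhVh).
  have ZG : Z^T *m (Qh *m Dh *m Qh) = diag_mx mu *m Z^T.
    by rewrite -GT -trmx_mul GZ trmx_mul tr_diag_mx.
  by rewrite YT -mulmxA QD -GQ mulmxA ZG -mulmxA.
set W := Y^T *m V.
set F := Y^T *m E *m V.
have FE : F = diag_mx mu *m W - W *m diag_mx lam.
  by rewrite /F /E mulmxBr mulmxBl YD -mulmxA DV !mulmxA.
have sqW : sq W = K%:R - sq (Vh^T *m V).
  rewrite sqE' /W trmx_mul trmxK mulmxA -(mulmxA V^T) YT /Y.
  rewrite -(mulmxA Qh) (mulmxA Z) ZZt mul1mx QhQh.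
  rewrite /Qh mulmxBr mulmx1 mulmxBl linearB /= VV mxtrace1 sqE' trmx_mul trmxK.
  by rewrite !mulmxA.
have sqF : sq F <= sq E.
  have -> : F = Z^T *m (Qh *m (E *m V)) by rewrite /F YT !mulmxA.
  rewrite sq_orthsq_mul //.
  apply: le_trans (sq_proj_mul _ QhT QhQh) _.
  exact: sq_mul_orth.
set S := [set i | gamma / 2 < `|mu 0 i|].
set ind := fun i => (i \in S)%:R : R.
set J := diag_mx (\row_i ind i).
have indsq i : ind i ^+ 2 = ind i by rewrite /ind; case: (i \in S); rewrite ?expr0n ?expr1n.
have JT : J^T = J by rewrite tr_diag_mx.
have JJ : J *m J = J.
  apply/matrixP => i j; rewrite mul_diag_mx !mxE mulrnAr -expr2 indsq.
  by [].
have Jl m' (X : 'M[R]_(T, m')) i j : (J *m X) i j = ind i * X i j.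
  by rewrite mul_diag_mx mxE mxE.
have Jr m' (X : 'M[R]_(m', T)) i j : (X *m J) i j = X i j * ind j.
  by rewrite mul_mx_diag mxE mxE.
have sJW : sq (J *m W) <= \tr J.
  have -> : J *m W = J *m Z^T *m Qh *m V by rewrite /W YT !mulmxA.
  apply: le_trans (sq_mul_orth _ VV) _.
  apply: le_trans (sq_mul_proj _ QhT QhQh) _.
  by rewrite sqE trmx_mul trmxK JT -(mulmxA J) (mulmxA Z^T) ZZ mul1mx JJ.
have entW i j : ((1%:M - J) *m W) i j = (1 - ind i) * W i j.
  by rewrite mulmxBl mul1mx mxE [X in _ + X]mxE Jl mulrBl mul1r.
have entF i j : F i j = (mu 0 i - lam 0 j) * W i j.
  rewrite FE mxE [X in _ + X]mxE mul_diag_mx mul_mx_diag !mxE; ring.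
have good : gamma ^+ 2 / 4 * sq ((1%:M - J) *m W) <= sq F.
  rewrite /sq mulr_sumr; apply: ler_sum => i _; rewrite mulr_sumr; apply: ler_sum => j _.
  rewrite entW entF /ind; case: (boolP (i \in S)) => iS.
    by rewrite subrr mul0r expr0n /= mulr0 sqr_ge0.
  have mi : `|mu 0 i| <= gamma / 2 by move: iS; rewrite inE -leNgt.
  have h := gap mi (gle j) (ltW gpos).
  by rewrite subr0 mul1r exprMn ler_wpM2r ?sqr_ge0.
have split : sq W = sq (J *m W) + sq ((1%:M - J) *m W).
  rewrite /sq -big_split; apply: eq_bigr => i _; rewrite -big_split; apply: eq_bigr => j _.
  rewrite Jl entW /ind; case: (i \in S); rewrite /= ?subrr ?subr0 ?mul1r ?mul0r expr0n /= ?addr0 ?add0r //.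
set c := gamma ^+ 2 / 4.
have cge0 : 0 <= c by rewrite /c divr_ge0 ?sqr_ge0.
have count : c * \tr J <= sq E.
  case: (pickP (fun i => i \in S)) => [i0 i0S|noS]; last first.
    rewrite mxtrace_diag big1 ?mulr0 ?sq_ge0 // => i _; by rewrite mxE /ind noS.
  have memS i : (i \in S) = (gamma / 2 < `|mu 0 i|) by rewrite inE.
  have muS i : i \in S -> mu 0 i != 0.
    rewrite memS => h; apply/eqP => m0; move: h; rewrite m0 normr0; lra.
  have lh k : gamma / 2 < `|lamh 0 k|.
    apply: lt_le_trans (topu _ (muS _ i0S) k); by rewrite -memS.
  have sqlb (x : R) : gamma / 2 < `|x| -> c <= x ^+ 2.
    move=> h; rewrite -real_normK ?num_real // /c.
    have h3 : 0 <= gamma / 2 by lra.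
    have h4 : (gamma / 2) ^+ 2 <= `|x| ^+ 2 by rewrite ler_pXn2r ?nnegrE ?normr_ge0 // ltW.
    apply: le_trans h4; rewrite expr_div_n; lra.
  have ZJ_V : Vh^T *m (Z *m J) = 0.
    apply/matrixP => k i; rewrite mulmxA Jr [X in _ = X]mxE.
    case: (boolP (i \in S)) => iS; last by rewrite /ind (negbTE iS) mulr0.
    have [h _] := Gz i (muS _ iS).
    have e : (Vh^T *m Z) k i = (Vh^T *m col i Z) k 0 by rewrite !mxE; apply: eq_bigr => l _; rewrite !mxE.
    by rewrite e h mxE mul0r.
  have DhZJ : Dh *m (Z *m J) = Z *m J *m diag_mx mu.
    apply/matrixP => r i; rewrite mulmxA Jr mul_mx_diag mxE Jr.
    case: (boolP (i \in S)) => iS; last by rewrite /ind (negbTE iS) !mulr0 mul0r.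
    have [_ h] := Gz i (muS _ iS).
    have e : (Dh *m Z) r i = (Dh *m col i Z) r 0 by rewrite !mxE; apply: eq_bigr => l _; rewrite !mxE.
    rewrite e h !mxE; ring.
  have QvD : Qv *m D = 0 by rewrite -QvT -DT -trmx_mul DQ0 trmx0.
  have DhE : Dh = E + D by rewrite /E subrK.
  have e1 : Qv *m Vh *m diag_mx lamh = Qv *m (E *m Vh).
    by rewrite -mulmxA -DhVh DhE (mulmxDl E D) (mulmxDr Qv) (mulmxA Qv D) QvD mul0mx addr0.
  have e2 : Qv *m (Z *m J) *m diag_mx mu = Qv *m (E *m (Z *m J)).
    by rewrite -mulmxA -DhZJ DhE (mulmxDl E D) (mulmxDr Qv) (mulmxA Qv D) QvD mul0mx addr0.
  have lb1 : c * sq (Qv *m Vh) <= sq (E *m Vh).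
    apply: le_trans (sq_diag_lb' (d := lamh) _) _; last by rewrite e1; exact: sq_proj_mul.
    move=> i j; rewrite exprMn mulrC; apply: ler_wpM2l; [exact: sqr_ge0|exact: sqlb].
  have lb2 : c * sq (Qv *m (Z *m J)) <= sq (E *m (Z *m J)).
    apply: le_trans (sq_diag_lb' (d := mu) _) _; last by rewrite e2; exact: sq_proj_mul.
    move=> i j; rewrite mulmxA Jr.
    case: (boolP (j \in S)) => jS; last by rewrite /ind (negbTE jS) mulr0 mul0r expr0n /= mulr0.
    rewrite /ind jS mulr1 exprMn mulrC; apply: ler_wpM2l; first exact: sqr_ge0.
    by apply: sqlb; rewrite -memS.
  have ZJT : (Z *m J)^T = J *m Z^T by rewrite trmx_mul JT.
  have ZJZJ : (Z *m J)^T *m (Z *m J) = J by rewrite ZJT -mulmxA (mulmxA Z^T) ZZ mul1mx JJ.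
  have BB : (Z *m J)^T *m (Z *m J) *m (Z *m J)^T = (Z *m J)^T by rewrite ZJZJ ZJT mulmxA JJ.
  have [PiT PiPi] := proj2 VhVh ZJ_V BB.
  set Pi := Vh *m Vh^T + Z *m J *m (Z *m J)^T in PiT PiPi.
  have s1 : sq (E *m Vh) + sq (E *m (Z *m J)) <= sq E.
    have -> : sq (E *m Vh) + sq (E *m (Z *m J)) = sq (E *m Pi).
      rewrite !sqE -mxtraceD (trmx_mul E Pi) PiT -(mulmxA E Pi) (mulmxA Pi) PiPi.
      by rewrite /Pi !trmx_mul mulmxDl mulmxDr !mulmxA.
    exact: sq_mul_proj _ PiT PiPi.
  have s2 : sq (V^T *m Vh) + sq (V^T *m (Z *m J)) <= K%:R.
    have -> : sq (V^T *m Vh) + sq (V^T *m (Z *m J)) = sq (V^T *m Pi).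
      rewrite !sqE -mxtraceD (trmx_mul V^T Pi) PiT -(mulmxA V^T Pi) (mulmxA Pi) PiPi.
      by rewrite /Pi !trmx_mul mulmxDl mulmxDr !mulmxA.
    apply: le_trans (sq_mul_proj _ PiT PiPi) _.
    by rewrite sqE trmxK VV mxtrace1.
  have sV : sq Vh = K%:R by rewrite sqE' VhVh mxtrace1.
  have sZJ : sq (Z *m J) = \tr J by rewrite sqE' ZJZJ.
  have c1 := sq_cproj (V := V) Vh VV.
  have c2 := sq_cproj (V := V) (Z *m J) VV.
  rewrite -/Qv sV in c1; rewrite -/Qv sZJ in c2.
  rewrite c1 in lb1; rewrite c2 in lb2.
  set a1 := sq (V^T *m Vh) in lb1 s2; set a2 := sq (V^T *m (Z *m J)) in lb2 s2.
  have h : 0 <= c * (K%:R - (a1 + a2)) by apply: mulr_ge0 => //; lra.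
  lra.
have hW : c * sq W <= 2 * sq E.
  rewrite split mulrDr.
  have h1 : c * sq (J *m W) <= sq E by apply: le_trans count; apply: ler_wpM2l.
  have h2 : c * sq ((1%:M - J) *m W) <= sq E by apply: le_trans good sqF.
  lra.
have hE : sq E <= 4 * T%:R * \sum_(i < T) frob (Ph i - P i) ^+ 2 := E_bound P Ph.
have Mc : forall x : 'cV[R]_K, sq (Vh^T *m V *m x) <= sq x.
  move=> x; rewrite -mulmxA; apply: le_trans (sq_orth_mul _ VhVh) _.
  by rewrite !sqE' trmx_mul -mulmxA (mulmxA V^T) VV mul1mx.
have [O [OO hO]] := polar Mc.
exists O; split => //.
have fr : frob (Vh *m O - V) ^+ 2 = 2 * K%:R - 2 * \tr (O^T *m (Vh^T *m V)).
  rewrite frob_sq sqD sqN dotm_tr sqE' trmx_mul -mulmxA (mulmxA Vh^T) VhVh mul1mx OO.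
  rewrite mxtrace1 sqE' VV mxtrace1 mulmxN linearN /= -mulmxA; ring.
have hX : frob (Vh *m O - V) ^+ 2 <= 2 * sq W by rewrite fr sqW; lra.
apply: le_trans hX _.
rewrite mulrAC ler_pdivlMr ?exprn_gt0 //.
rewrite -/c in hW; rewrite /c in hW.
nra.
Qed.
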